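(* Let $f_N=\sum_{k=0}^{N}\binom{N}{k}^3$ denote the $N$-th Franel number. For every non-negative integer $n$, $$v_2(f_{2n+1})\ge 1+v_2\Big(\binom{2n}{n}\Big),\qquad v_2(f_{2n})\ge v_2\Big(\binom{2n}{n}\Big).$$
   Context: $v_2(y)$ denotes the $2$-adic valuation of an integer $y$, i.e. the exponent of the highest power of $2$ dividing $y$. *)

(* Defs.v *)
From mathcomp Require Import all_boot.
Set Implicit Arguments. Unset Strict Implicit. Unset Printing Implicit Defensive.

Definition franel (N : nat) : nat := \sum_(0 <= k < N.+1) 'C(N, k) ^ 3.

Definition v2 (y : nat) : nat := logn 2 y.

(* Main.v *)
Require Import Defs.
From mathcomp Require Import all_boot all_algebra zify ring.

Lemma binA n k i : i <= k -> k <= n ->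
  'C(n, k) * 'C(k, i) = 'C(n, i) * 'C(n - i, k - i).
Proof.
move=> hik hkn.
have h1 := bin_fact hik. have h2 := bin_fact hkn.
have h3 := bin_fact (leq_sub2r i hkn). have h4 := bin_fact (leq_trans hik hkn).
have e : n - i - (k - i) = n - k by lia.
rewrite e in h3.
apply/eqP; rewrite -(eqn_pmul2r (_ : 0 < i`! * (k - i)`! * (n - k)`!)); last by rewrite !muln_gt0 !fact_gt0.
apply/eqP.
transitivity ('C(n, k) * ('C(k, i) * (i`! * (k - i)`!)) * (n - k)`!); first by ring.
rewrite h1.
transitivity ('C(n, i) * i`! * ('C(n - i, k - i) * ((k - i)`! * (n - k)`!))); last by ring.
rewrite h3; transitivity n`!; [rewrite -h2; ring | rewrite -h4; ring].
Qed.

Lemma binB n k i : i <= k -> k <= n ->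
  'C(n, k) * 'C(n - k, i) = 'C(n, i) * 'C(n - i, k).
Proof.
move=> hik hkn.
case: (leqP (k + i) n) => hki; last first.
  by rewrite (@bin_small (n - k) i) ?(@bin_small (n - i) k) ?muln0 //; lia.
have hi : i <= n - k by lia.
have hk : k <= n - i by lia.
have h1 := bin_fact hkn. have h2 := bin_fact hi.
have h3 := bin_fact hk. have h4 := bin_fact (leq_trans hik hkn).
have e : n - i - k = n - k - i by lia.
rewrite e in h3.
apply/eqP; rewrite -(eqn_pmul2r (_ : 0 < k`! * i`! * (n - k - i)`!)); last by rewrite !muln_gt0 !fact_gt0.
apply/eqP.
transitivity ('C(n, k) * k`! * ('C(n - k, i) * (i`! * (n - k - i)`!))); first by ring.
rewrite h2.
transitivity ('C(n, i) * i`! * ('C(n - i, k) * (k`! * (n - k - i)`!))); last by ring.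
rewrite h3; transitivity n`!; [rewrite -h1; ring | rewrite -h4; ring].
Qed.

Lemma binT n k i : i <= k -> k <= n ->
  'C(n, k) ^ 2 * 'C(k, i) * 'C(n - k, i) = 'C(n, i) ^ 2 * ('C(n - i, k - i) * 'C(n - i, k)).
Proof.
move=> hik hkn.
have h1 := binA n k i hik hkn. have h2 := binB n k i hik hkn.
transitivity (('C(n, k) * 'C(k, i)) * ('C(n, k) * 'C(n - k, i))); first by ring.
rewrite h1 h2; ring.
Qed.

Lemma binU i r :
  'C(i + (i + r), i) ^ 2 * 'C((i + r).*2, r) =
  'C(i + (i + r), i.*2) * ('C(i.*2, i) * 'C((i + r).*2, i + r)).
Proof.
set n := i + (i + r). set m := i + r.
have h1 : 'C(n, i) * (i`! * m`!) = n`!.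
  by rewrite -(bin_fact (_ : i <= n)) ?leq_addr // /n addKn.
have h2 : 'C(m.*2, r) * (r`! * n`!) = (m.*2)`!.
  by rewrite -(bin_fact (_ : r <= m.*2)) /n /m; [congr (_ * (_ * _`!)); lia | lia].
have h3 : 'C(n, i.*2) * ((i.*2)`! * r`!) = n`!.
  by rewrite -(bin_fact (_ : i.*2 <= n)) /n; [congr (_ * (_ * _`!)); lia | lia].
have h4 : 'C(i.*2, i) * (i`! * i`!) = (i.*2)`!.
  by rewrite -(bin_fact (_ : i <= i.*2)); [congr (_ * (_ * _`!)); lia | lia].
have h5 : 'C(m.*2, m) * (m`! * m`!) = (m.*2)`!.
  by rewrite -(bin_fact (_ : m <= m.*2)); [congr (_ * (_ * _`!)); lia | lia].
apply/eqP; rewrite -(eqn_pmul2r (_ : 0 < i`! * i`! * m`! * m`! * r`!)); last by rewrite !muln_gt0 !fact_gt0.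
apply/eqP.
transitivity (('C(n, i) * (i`! * m`!)) * ('C(n, i) * (i`! * m`!)) * 'C(m.*2, r) * r`!); first by ring.
rewrite h1.
transitivity (('C(n, i.*2) * (('C(i.*2, i) * (i`! * i`!)) * r`!)) * ('C(m.*2, m) * (m`! * m`!))); last by ring.
rewrite h4 h3 h5 -h2; ring.
Qed.

Lemma binV {n k} : k <= n -> 'C(n, k) = \sum_(i < n.+1) 'C(k, i) * 'C(n - k, i).
Proof.
move=> hkn.
have := binomial.Vandermonde (n - k) k k. rewrite subnK // => <-.
rewrite (big_ord_widen _ (fun j => 'C(n - k, j) * 'C(k, k - j)) (_ : k.+1 <= n.+1)) //.
rewrite big_mkcond /=; apply: eq_bigr => j _.
case: ifP => hj.
  by rewrite bin_sub // mulnC.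
by rewrite bin_small ?muln0 //; lia.
Qed.

Lemma franel_split n : franel n =
  \sum_(i < n.+1) \sum_(k < n.+1) 'C(n, k) ^ 2 * 'C(k, i) * 'C(n - k, i).
Proof.
rewrite /franel big_mkord exchange_big /=; apply: eq_bigr => k _.
rewrite expnSr {2}(binV (ltnSE (ltn_ord k))) big_distrr /=.
by apply: eq_bigr => i _; rewrite mulnA.
Qed.

Lemma inner_zero n i : n < i.*2 ->
  \sum_(k < n.+1) 'C(n, k) ^ 2 * 'C(k, i) * 'C(n - k, i) = 0.
Proof.
move=> h; apply: big1 => k _.
case: (ltnP k i) => hk; first by rewrite (bin_small hk) muln0 mul0n.
by rewrite (@bin_small (n - k) i) ?muln0 //; lia.
Qed.

Lemma inner_sum i r n m : m = i + r -> n = i + m ->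
  \sum_(k < n.+1) 'C(n, k) ^ 2 * 'C(k, i) * 'C(n - k, i)
  = 'C(n, i) ^ 2 * 'C(m.*2, r).
Proof.
move=> hm hn.
rewrite -(big_mkord xpredT (fun k => 'C(n, k) ^ 2 * 'C(k, i) * 'C(n - k, i))) (@big_cat_nat _ _ _ i) /= ?leq0n; last by lia.
rewrite big_nat_cond big1 ?add0n; last first.
  by move=> k /andP[/andP[_ hk] _]; rewrite (bin_small hk) muln0 mul0n.
rewrite -{1}(add0n i) big_addn.
have -> : n.+1 - i = m.+1 by lia.
rewrite (@eq_big_nat _ _ _ 0 m.+1 _ (fun k => 'C(n, i) ^ 2 * ('C(m, k) * 'C(m, k + i)))); last first.
  move=> k /andP[_ hk]; rewrite binT ?leq_addl //; last by lia.
  have -> : n - i = m by lia.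
  by rewrite addnK.
rewrite -big_distrr /=; congr (_ * _).
rewrite (@big_cat_nat _ _ _ r.+1) /= ?leq0n //; last by lia.
rewrite [X in _ + X]big_nat_cond [X in _ + X]big1 ?addn0; last first.
  by move=> k /andP[/andP[hk _] _]; rewrite (@bin_small m (k + i)) ?muln0 //; lia.
rewrite -addnn -binomial.Vandermonde big_mkord; apply: eq_bigr => [[k hk]] _ /=.
congr (_ * _); rewrite -(@bin_sub m (r - k)); last by lia.
congr (binomial _ _); lia.
done.
Qed.

Definition Lf m := logn 2 m`!.

Lemma Lf_odd m : Lf m.*2.+1 = Lf m.*2.
Proof.
rewrite /Lf factS lognM // ?fact_gt0 // logn_coprime //.
by rewrite coprime2n /= odd_double.
Qed.

Lemma Lf_double m : Lf m.*2 = m + Lf m.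
Proof.
elim: m => [|m IH] //.
rewrite doubleS /Lf factS lognM // ?fact_gt0 //.
rewrite -/(Lf _) Lf_odd IH /Lf [in RHS]factS lognM // ?fact_gt0 //.
rewrite -doubleS -muln2 lognM //.
have -> : logn 2 2 = 1 by rewrite (@logn_prime 2 2) //.
lia.
Qed.

Definition E m := logn 2 'C(m.*2, m).

Lemma EK m : E m + Lf m = m.
Proof.
have h := bin_fact (leq_addr m m).
rewrite addKn addnn in h.
have : logn 2 ('C(m.*2, m) * (m`! * m`!)) = Lf m.*2 by rewrite h.
rewrite lognM ?muln_gt0 ?fact_gt0 ?bin_gt0 ?leq_addl -?addnn ?leq_addr //.
rewrite lognM ?fact_gt0 // addnn Lf_double /E /Lf. lia.
Qed.

Lemma Lf_add a b : Lf a + Lf b <= Lf (a + b).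
Proof.
rewrite /Lf -lognM ?fact_gt0 //; apply: dvdn_leq_log; first exact: fact_gt0.
rewrite -(bin_fact (leq_addr b a)) addKn; exact: dvdn_mull.
Qed.

Lemma E_dvd a b : 2 ^ E (a + b) %| 'C(a.*2, a) * 'C(b.*2, b).
Proof.
have ha : 0 < 'C(a.*2, a) by rewrite bin_gt0 -addnn leq_addr.
have hb : 0 < 'C(b.*2, b) by rewrite bin_gt0 -addnn leq_addr.
rewrite pfactor_dvdn ?muln_gt0 ?ha ?hb // lognM //.
have := EK a; have := EK b; have := EK (a + b); have := Lf_add a b.
rewrite /E; lia.
Qed.

Lemma E_double n : E n.*2 = E n.
Proof. have := EK n; have := EK n.*2; rewrite Lf_double; lia. Qed.

Lemma E_odd n : E n.*2.+1 = (E n).+1.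
Proof. have := EK n; have := EK n.*2.+1; rewrite Lf_odd Lf_double; lia. Qed.

Lemma franel_gt0 n : 0 < franel n.
Proof. by rewrite /franel big_nat_recl // bin0 exp1n. Qed.

Lemma inner_dvd n i :
  2 ^ E n %| \sum_(k < n.+1) 'C(n, k) ^ 2 * 'C(k, i) * 'C(n - k, i).
Proof.
case: (ltnP n i.*2) => h; first by rewrite inner_zero ?dvdn0.
rewrite (@inner_sum i (n - i.*2) n (i + (n - i.*2))); [|lia|lia].
have hn : n = i + (i + (n - i.*2)) by lia.
move: (n - i.*2) hn => r ->.
rewrite binU; apply: dvdn_mull; exact: E_dvd.
Qed.

Lemma franel_dvd n : 2 ^ E n %| franel n.
Proof. by rewrite franel_split; apply: dvdn_sum => i _; apply: inner_dvd. Qed.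

Theorem corollary4 (n : nat) :
  1 + v2 'C(n.*2, n) <= v2 (franel n.*2.+1) /\ v2 'C(n.*2, n) <= v2 (franel n.*2).
Proof.
rewrite /v2 -/(E n).
split.
  by rewrite add1n -E_odd -pfactor_dvdn ?franel_gt0 ?franel_dvd.
by rewrite -E_double -pfactor_dvdn ?franel_gt0 ?franel_dvd.
Qed.
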